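(* For all probability measures $P,Q$, all $\alpha>0$ and all $\gamma\ge1$, writing $E:=E_\gamma(P\|Q)$: $$\mathscr{H}_\alpha(P\|Q)\ \ge\ \frac{1}{\alpha-1}\Bigl[\bigl(1+\tfrac{E}{\gamma}\bigr)^{1-\alpha} + \bigl(\tfrac{1-E}{\gamma}\bigr)^{1-\alpha} - 1 - \gamma^{\alpha-1}\Bigr]\quad(\alpha\ne1),$$ $$D(P\|Q)\ \ge\ -\ln\Bigl(\bigl(1+\tfrac{E}{\gamma}\bigr)(1-E)\Bigr)\quad(\text{in nats}),$$ and, for $\alpha\ne1$, $$D_\alpha(P\|Q)\ \ge\ \frac{1}{\alpha-1}\log\Bigl(\bigl(1+\tfrac{E}{\gamma}\bigr)^{1-\alpha}+\gamma^{\alpha-1}\bigl[(1-E)^{1-\alpha}-1\bigr]\Bigr),$$ while for $\alpha=1$, $D_1(P\|Q)=D(P\|Q)\ge -\log\bigl((1+\tfrac{E}{\gamma})(1-E)\bigr)$. (Expressions equal to $+\infty$ when $E=1$ and the corresponding power/logarithm diverges.)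
   Context: $\log$ is to an arbitrary fixed base, $\ln$ is the natural logarithm. For densities $p,q$ w.r.t. a dominating measure $\mu$: $E_\gamma(P\|Q):=\int(p-\gamma q)^+\,\mathrm{d}\mu$ for $\gamma\ge1$; the Hellinger divergence of order $\alpha\in(0,1)\cup(1,\infty)$ is $\mathscr{H}_\alpha(P\|Q):=D_{f_\alpha}(P\|Q)$ with $f_\alpha(t)=\frac{t^\alpha-1}{\alpha-1}$, where $D_f(P\|Q):=\int qf(p/q)\,\mathrm{d}\mu$ (standard conventions at $0$); $D(P\|Q)$ is the relative entropy $D_f$ with $f(t)=t\log t$; the Rényi divergence is $D_\alpha(P\|Q):=\frac{1}{\alpha-1}\log\bigl(1+(\alpha-1)\mathscr{H}_\alpha(P\|Q)\bigr)$ for $\alpha\neq1$, and $D_1:=D$. *)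

(* Defs.v *)
From HB Require Import structures.
From mathcomp Require Import all_boot all_order all_algebra.
From mathcomp Require Import all_classical all_reals all_analysis.

Set Implicit Arguments.
Unset Strict Implicit.
Unset Printing Implicit Defensive.

Import Order.TTheory GRing.Theory Num.Theory.
Import numFieldNormedType.Exports.

Local Open Scope classical_set_scope.
Local Open Scope ring_scope.

Section Divergences.
Context {R : realType} {d : measure_display} {T : measurableType d}.
Variable mu : {measure set T -> \bar R}.

Definition logb (b x : R) : R := ln x / ln b.

Definition elogb (b : R) (x : \bar R) : \bar R :=
  match x with
  | EFin r => if 0 < r then (logb b r)%:E else -oo%E
  | +oo%E => +oo%E
  | -oo%E => -oo%E
  end.

Definition epow (x s : R) : \bar R :=
  if 0 < x then (x `^ s)%:E
  else if 0 < s then 0%E else if s == 0 then 1%E else +oo%E.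

(** f'(oo) := lim_{t -> oo} f(t)/t, in the extended reals *)
Definition fstar (f : R -> R) : \bar R :=
  lim ((f t / t)%:E @[t --> +oo]).

(** integrand q f(p/q) with the standard conventions at 0:
    0 f(0/0) = 0, 0 f(a/0) = a f'(oo) for a > 0 *)
Definition fdiv_integrand (f : R -> R) (p q : T -> R) (x : T) : \bar R :=
  if 0 < q x then (q x * f (p x / q x))%:E
  else if 0 < p x then ((p x)%:E * fstar f)%E
  else 0%E.

(** f-divergence D_f(P||Q) for densities p, q w.r.t. mu *)
Definition fdiv (f : R -> R) (p q : T -> R) : \bar R :=
  (\int[mu]_x fdiv_integrand f p q x)%E.

Definition Egamma (gamma : R) (p q : T -> R) : R :=
  fine (\int[mu]_x (Num.max (p x - gamma * q x) 0)%:E)%E.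

Definition hellinger (alpha : R) (p q : T -> R) : \bar R :=
  fdiv (fun t => (t `^ alpha - 1) / (alpha - 1)) p q.

Definition KL (b : R) (p q : T -> R) : \bar R :=
  fdiv (fun t => t * logb b t) p q.

Definition renyi (b alpha : R) (p q : T -> R) : \bar R :=
  if alpha == 1 then KL b p q
  else (((alpha - 1)^-1)%:E * elogb b (1 + (alpha - 1)%:E * hellinger alpha p q))%E.

End Divergences.

(* Main.v *)
Require Import Defs.
From HB Require Import structures.
From mathcomp Require Import all_boot all_order all_algebra.
From mathcomp Require Import all_classical all_reals all_analysis.
From mathcomp Require Import ring lra measurable_realfun.
Import Order.TTheory GRing.Theory Num.Theory.
Import numFieldNormedType.Exports.
Set Implicit Arguments.
Unset Strict Implicit.
Unset Printing Implicit Defensive.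
Local Open Scope classical_set_scope.
Local Open Scope ring_scope.

Section reals.
Context {R : realType}.
Implicit Types (a s t u x y : R).

Lemma ln_le_sub1 u : 0 < u -> ln u <= u - 1.
Proof.
move=> u0; have h : ln (1 + (u - 1)) <= u - 1 by apply: le_ln1Dx; lra.
by rewrite addrCA subrr addr0 in h.
Qed.

Lemma mul_ln_ge u : 0 < u -> u - 1 <= u * ln u.
Proof.
move=> u0; have ui : 0 < u^-1 by rewrite invr_gt0.
have := ln_le_sub1 ui.
rewrite lnV ?posrE // => h.
have : u * (- ln u) <= u * (u^-1 - 1) by rewrite ler_pM2l.
rewrite mulrBr mulfV ?gt_eqF // mulr1; lra.
Qed.

Lemma bern_ge a u : 1 <= a -> 0 <= u -> 1 + a * (u - 1) <= u `^ a.
Proof.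
move=> a1; rewrite le0r => /orP[/eqP->|u0].
  rewrite powR0; last by apply/negP => /eqP a0; rewrite a0 in a1; lra.
  lra.
rewrite -mulr_powRB1 ?(ltW u0) //; last lra.
have h1 : 1 + (a - 1) * ln u <= u `^ (a - 1).
  by rewrite /powR gt_eqF // mulrC; exact: expR_ge1Dx.
have h2 := mul_ln_ge u0.
have : u * (1 + (a - 1) * ln u) <= u * u `^ (a - 1) by rewrite ler_pM2l.
have : (a - 1) * (u - 1) <= (a - 1) * (u * ln u) by rewrite ler_wpM2l // subr_ge0.
nra.
Qed.

Lemma bern_le a u : 0 < a <= 1 -> 0 <= u -> u `^ a <= 1 + a * (u - 1).
Proof.
move=> /andP[a0 a1] u0.
have b1 : 1 <= a^-1 by rewrite invf_ge1.
have := bern_ge b1 (powR_ge0 u a).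
rewrite -powRrM mulfV ?gt_eqF // powRr1 // => h.
have : a * (1 + a^-1 * (u `^ a - 1)) <= a * u by rewrite ler_pM2l.
rewrite mulrDr mulrA mulfV ?gt_eqF //; lra.
Qed.


Lemma tan_aux a s x y : 0 < s -> 0 <= x -> 0 < y ->
  let u := x / (s * y) in
  x `^ a * y `^ (1 - a) = s `^ a * y * u `^ a /\
  a * s `^ (a - 1) * x + (1 - a) * s `^ a * y = s `^ a * y * (1 + a * (u - 1)).
Proof.
move=> s0 x0 y0 u.
have sy0 : s * y != 0 by rewrite mulf_neq0 // gt_eqF.
have u0 : 0 <= u by rewrite /u divr_ge0 // mulr_ge0 // ltW.
have hx : x = s * y * u by rewrite /u mulrC divfK.
clearbody u; subst x; split.
  rewrite !powRM ?mulr_ge0 ?(ltW s0) ?(ltW y0) //.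
  rewrite -!mulrA; congr (_ * _); rewrite mulrCA [RHS]mulrC; congr (_ * _).
  rewrite -powRD; last by rewrite (gt_eqF y0) implybT.
  by rewrite (_ : a + (1 - a) = 1) ?powRr1 ?(ltW y0) //; ring.
rewrite powRB; last by rewrite (gt_eqF s0) implybT.
rewrite powRr1 ?(ltW s0) //.
field; by rewrite gt_eqF.
Qed.

Lemma tan_ge a s x y : 1 <= a -> 0 < s -> 0 <= x -> 0 < y ->
  a * s `^ (a - 1) * x + (1 - a) * s `^ a * y <= x `^ a * y `^ (1 - a).
Proof.
move=> a1 s0 x0 y0; have [-> ->] := tan_aux a s0 x0 y0.
rewrite ler_wpM2l ?mulr_ge0 ?powR_ge0 ?(ltW y0) //; apply: bern_ge => //.
by rewrite divr_ge0 // mulr_ge0 // ltW.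
Qed.

Lemma tan_le a s x y : 0 < a <= 1 -> 0 < s -> 0 <= x -> 0 < y ->
  x `^ a * y `^ (1 - a) <= a * s `^ (a - 1) * x + (1 - a) * s `^ a * y.
Proof.
move=> a1 s0 x0 y0; have [-> ->] := tan_aux a s0 x0 y0.
rewrite ler_wpM2l ?mulr_ge0 ?powR_ge0 ?(ltW y0) //; apply: bern_le => //.
by rewrite divr_ge0 // mulr_ge0 // ltW.
Qed.


Section powW.
Variables (a g s r : R).
Definition K1 := a * s `^ (a - 1) + g `^ (a - 1) * (a * r `^ (a - 1) + (1 - a) * r `^ a - 1).
Definition K2 := (1 - a) * s `^ a.
Definition K3 := (1 - a) * s `^ a / g - g `^ (a - 1) * ((1 - a) * r `^ a).

Lemma K_split t : 0 < g ->
  K1 * t + K2 + K3 * (t - g) =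
  (a * s `^ (a - 1) * t + (1 - a) * s `^ a * (t / g) - g `^ (a - 1) * t)
  + g `^ (a - 1) * (a * r `^ (a - 1) * t + (1 - a) * r `^ a * g).
Proof. move=> g0; rewrite /K1 /K2 /K3; field; by rewrite gt_eqF. Qed.

Lemma K_split0 t :
  K1 * t + K2 =
  (a * s `^ (a - 1) * t + (1 - a) * s `^ a * 1)
  + g `^ (a - 1) * t * ((a * r `^ (a - 1) * 1 + (1 - a) * r `^ a * 1) - 1).
Proof. rewrite /K1 /K2; ring. Qed.

Lemma powW_ge t : 1 <= a -> 1 <= g -> 0 < s -> 0 < r -> 0 <= t ->
  K1 * t + K2 + K3 * Num.max (t - g) 0 <= t `^ a.
Proof.
move=> a1 g1 s0 r0 t0.
have g0 : 0 < g by lra.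
have [tg|gt] := leP t g.
  rewrite (_ : Num.max (t - g) 0 = 0); last by apply/max_idPr; lra.
  rewrite mulr0 addr0 K_split0.
  have h1 := tan_ge a1 s0 t0 ltr01.
  have h2 := tan_ge a1 r0 ler01 ltr01.
  rewrite powR1 mulr1 in h1; rewrite powR1 mulr1 in h2.
  have h3 : g `^ (a - 1) * t * ((a * r `^ (a - 1) * 1 + (1 - a) * r `^ a * 1) - 1) <= 0.
    by rewrite mulr_ge0_le0 ?mulr_ge0 ?powR_ge0 // subr_le0.
  lra.
rewrite (_ : Num.max (t - g) 0 = t - g); last by apply/max_idPl; lra.
rewrite K_split //.
have hA : a * s `^ (a - 1) * t + (1 - a) * s `^ a * (t / g) <= g `^ (a - 1) * t.
  have h := tan_ge a1 s0 (ltW g0) ltr01.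
  rewrite powR1 !mulr1 in h.
  have tg0 : 0 <= t / g by rewrite divr_ge0 // ltW.
  have := ler_wpM2r tg0 h.
  have -> : g `^ a = g `^ (a - 1) * g by rewrite mulrC mulr_powRB1 ?(ltW g0) //; lra.
  have -> : (a * s `^ (a - 1) * g + (1 - a) * s `^ a) * (t / g) =
     a * s `^ (a - 1) * t + (1 - a) * s `^ a * (t / g).
    by field; rewrite gt_eqF.
  have -> : g `^ (a - 1) * g * (t / g) = g `^ (a - 1) * t.
    by field; rewrite gt_eqF.
  done.
have hB : g `^ (a - 1) * (a * r `^ (a - 1) * t + (1 - a) * r `^ a * g) <= t `^ a.
  have h := tan_ge a1 r0 t0 g0.
  have := ler_wpM2l (powR_ge0 g (a - 1)) h.
  rewrite mulrCA -powRD; last by rewrite (gt_eqF g0) implybT.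
  by rewrite (_ : a - 1 + (1 - a) = 0) ?powRr0 ?mulr1 //; ring.
lra.
Qed.

Lemma powW_le t : 0 < a <= 1 -> 1 <= g -> 0 < s -> 0 < r -> 0 <= t ->
  t `^ a <= K1 * t + K2 + K3 * Num.max (t - g) 0.
Proof.
move=> a1 g1 s0 r0 t0.
have a0 : 0 < a by case/andP: a1.
have g0 : 0 < g by lra.
have [tg|gt] := leP t g.
  rewrite (_ : Num.max (t - g) 0 = 0); last by apply/max_idPr; lra.
  rewrite mulr0 addr0 K_split0.
  have h1 := tan_le a1 s0 t0 ltr01.
  have h2 := tan_le a1 r0 ler01 ltr01.
  rewrite powR1 mulr1 in h1; rewrite powR1 mulr1 in h2.
  have h3 : 0 <= g `^ (a - 1) * t * ((a * r `^ (a - 1) * 1 + (1 - a) * r `^ a * 1) - 1).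
    by rewrite mulr_ge0 ?mulr_ge0 ?powR_ge0 // subr_ge0.
  lra.
rewrite (_ : Num.max (t - g) 0 = t - g); last by apply/max_idPl; lra.
rewrite K_split //.
have hA : g `^ (a - 1) * t <= a * s `^ (a - 1) * t + (1 - a) * s `^ a * (t / g).
  have h := tan_le a1 s0 (ltW g0) ltr01.
  rewrite powR1 !mulr1 in h.
  have tg0 : 0 <= t / g by rewrite divr_ge0 // ltW.
  have := ler_wpM2r tg0 h.
  have -> : g `^ a = g `^ (a - 1) * g by rewrite mulrC mulr_powRB1 ?(ltW g0) //.
  have -> : (a * s `^ (a - 1) * g + (1 - a) * s `^ a) * (t / g) =
     a * s `^ (a - 1) * t + (1 - a) * s `^ a * (t / g).
    by field; rewrite gt_eqF.
  have -> : g `^ (a - 1) * g * (t / g) = g `^ (a - 1) * t.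
    by field; rewrite gt_eqF.
  done.
have hB : t `^ a <= g `^ (a - 1) * (a * r `^ (a - 1) * t + (1 - a) * r `^ a * g).
  have h := tan_le a1 r0 t0 g0.
  have := ler_wpM2l (powR_ge0 g (a - 1)) h.
  rewrite mulrCA -powRD; last by rewrite (gt_eqF g0) implybT.
  by rewrite (_ : a - 1 + (1 - a) = 0) ?powRr0 ?mulr1 //; ring.
lra.
Qed.
End powW.


Lemma KLtan s t : 0 < s -> 0 <= t -> (ln s + 1) * t - s <= t * ln t.
Proof.
move=> s0; rewrite le0r => /orP[/eqP->|t0]; first by rewrite !mul0r mulr0 sub0r oppr_le0 ltW.
have h := ln_le_sub1 (divr_gt0 s0 t0).
rewrite ln_div ?posrE // in h.
have := ler_wpM2l (ltW t0) h.
rewrite mulrBr mulrBr mulrCA divff ?gt_eqF // mulr1 mulr1; lra.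
Qed.

Definition L1 s r := ln s + ln r + 2 - r.
Definition L3 g s r := r - s / g.

Lemma KLW s r g t : 0 < s -> 0 < r -> 1 <= g -> 0 <= t ->
  L1 s r * t + (- s) + L3 g s r * Num.max (t - g) 0 <= t * ln t.
Proof.
move=> s0 r0 g1 t0; have g0 : 0 < g by lra.
rewrite /L1 /L3.
have h2 := ln_le_sub1 r0.
have [tg|gt] := leP t g.
  rewrite (_ : Num.max (t - g) 0 = 0); last by apply/max_idPr; lra.
  have h1 := KLtan s0 t0.
  have h3 : t * (ln r - (r - 1)) <= 0 by rewrite mulr_ge0_le0 // subr_le0.
  lra.
rewrite (_ : Num.max (t - g) 0 = t - g); last by apply/max_idPl; lra.
have h1 := KLtan s0 (ltW g0).
have tg0 : 0 <= t / g by rewrite divr_ge0 // ltW.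
have := ler_wpM2r tg0 h1.
have -> : ((ln s + 1) * g - s) * (t / g) = (ln s + 1) * t - s * (t / g) by field; rewrite gt_eqF.
have -> : g * ln g * (t / g) = t * ln g by field; rewrite gt_eqF.
move=> hA.
have hB := KLtan (mulr_gt0 r0 g0) t0.
rewrite lnM ?posrE // in hB.
have e : (r - s / g) * (t - g) = r * t - r * g - (s * (t / g) - s) by field; rewrite gt_eqF.
lra.
Qed.


Local Open Scope ereal_scope.
Lemma fstar_pow_gt1 a : (1 < a)%R -> fstar (fun t : R => (t `^ a - 1) / (a - 1))%R = +oo.
Proof.
move=> a1; rewrite /fstar; apply: cvg_lim => //; apply/cvgeyPge => A.
exists (Num.max 1%R (expR A)); split; first by rewrite num_real.
move=> t /=; rewrite gt_max => /andP[t1 tA].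
have t0 : (0 < t)%R by lra.
have lnA : (A < ln t)%R by rewrite -(@ltr_expR R) lnK // posrE.
rewrite lee_fin.
have h1 : (1 + (a - 1) * ln t <= t `^ (a - 1))%R.
  by rewrite /powR gt_eqF // mulrC; exact: expR_ge1Dx.
have h2 : (t `^ a = t * t `^ (a - 1))%R by rewrite mulr_powRB1 ?(ltW t0) //; lra.
have h3 : (t * (1 + (a - 1) * ln t) <= t * t `^ (a - 1))%R by rewrite ler_pM2l.
have lt0 : (0 <= ln t)%R by apply: ln_ge0; lra.
rewrite ler_pdivlMr // ler_pdivlMr; last lra.
have : (A * t <= ln t * t)%R by rewrite ler_pM2r //; lra.
have : (0 <= (a - 1) * (ln t * t))%R by rewrite mulr_ge0 ?mulr_ge0 //; lra.
nra.
Qed.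

Lemma fstar_KL b : (0 < ln b)%R -> fstar (fun t : R => t * logb b t)%R = +oo.
Proof.
move=> b0; rewrite /fstar; apply: cvg_lim => //; apply/cvgeyPge => A.
exists (expR (A * ln b)); split; first by rewrite num_real.
move=> t /= tA.
have t0 : (0 < t)%R by rewrite (lt_trans _ tA) // expR_gt0.
have lnA : (A * ln b < ln t)%R by rewrite -(@ltr_expR R) lnK // posrE.
rewrite lee_fin [X in (_ <= X)%R]mulrC mulrA mulVf ?gt_eqF // mul1r /logb ler_pdivlMr //; lra.
Qed.

Lemma fstar_pow_lt1 a : (0 < a < 1)%R -> fstar (fun t : R => (t `^ a - 1) / (a - 1))%R = 0.
Proof.
move=> /andP[a0 a1]; rewrite /fstar; apply: cvg_lim => //.
apply: cvg_EFin; first exact: nearW.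
rewrite /comp /=; apply/cvgrPdist_lt => e e0.
set c := (1 - a)%R; have c0 : (0 < c)%R by rewrite /c; lra.
set K := ((c * c * e)^-1)%R.
have K0 : (0 < K)%R by rewrite /K invr_gt0 !mulr_gt0.
exists (Num.max 1%R (expR K)); split; first by rewrite num_real.
move=> t /=; rewrite gt_max => /andP[t1 tK].
have t0 : (0 < t)%R by lra.
have hlnK : (K < ln t)%R by rewrite -(@ltr_expR R) lnK // posrE.
have ta1 : (1 <= t `^ a)%R.
  have := @ge0_ler_powR R a (ltW a0) 1%R t; rewrite powR1; apply; rewrite ?nnegrE; lra.
have Eq : (t `^ a / t = (expR (c * ln t))^-1)%R.
  have tE : t = expR (ln t) by rewrite lnK // posrE.
  rewrite /powR gt_eqF // {2}tE -expRB -expRN; congr expR.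
  rewrite /c; ring.
have he : (c * K < expR (c * ln t))%R.
  have := expR_ge1Dx (c * ln t); rewrite -(ltr_pM2l c0) in hlnK.
  move=> h; apply: (lt_le_trans _ h); lra.
have cK : (c * K = (c * e)^-1)%R.
  rewrite /K !invfM !mulrA mulfV ?gt_eqF // mul1r; done.
have hi : ((expR (c * ln t))^-1 < c * e)%R.
  rewrite -(invrK (c * e)%R) ltf_pV2 ?posrE ?expR_gt0 ?invr_gt0 ?mulr_gt0 //.
  by rewrite -cK.
rewrite sub0r normrN.
have -> : ((t `^ a - 1) / (a - 1) / t = - ((t `^ a - 1) / t / c))%R.
  rewrite /c; field; apply/and3P; split; apply/negP => /eqP h; lra.
rewrite normrN ger0_norm; last by rewrite !divr_ge0 ?subr_ge0 // ltW.
rewrite ltr_pdivrMr //; apply: (@le_lt_trans _ _ (t `^ a / t)%R).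
  rewrite ler_pM2r ?invr_gt0 //; lra.
by rewrite Eq [(e * c)%R]mulrC.
Qed.

End reals.

Section kappa.
Context {R : realType}.
Lemma pow_kappa (a g s r t : R) : 0 < a -> a != 1 -> 1 <= g -> 0 < s -> 0 < r -> 0 <= t ->
  K1 a g s r / (a - 1) * t + (K2 a s - 1) / (a - 1) + K3 a g s r / (a - 1) * Num.max (t - g) 0
  <= (t `^ a - 1) / (a - 1).
Proof.
move=> a0 a1 g1 s0 r0 t0.
have [a1'|a1'|a1'] := ltgtP a 1; last by rewrite a1' eqxx in a1.
  have h := @powW_le _ a g s r t (andb_true_intro (conj a0 (ltW a1'))) g1 s0 r0 t0.
  have an : a - 1 < 0 by lra.
  rewrite mulrAC [X in _ + X <= _]mulrAC -!mulrDl ler_nM2r ?invr_lt0 //; lra.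
have h := @powW_ge _ a g s r t (ltW a1') g1 s0 r0 t0.
have ap : 0 < a - 1 by lra.
rewrite mulrAC [X in _ + X <= _]mulrAC -!mulrDl ler_pM2r ?invr_gt0 //; lra.
Qed.

Lemma pow_slope (a g s r : R) : 0 < a < 1 -> 1 <= g -> 0 < s -> 0 < r ->
  0 <= K1 a g s r + K3 a g s r.
Proof.
move=> a1 g1 s0 r0; have g0 : 0 < g by lra.
have a0 : 0 < a by case/andP: a1.
have a1' : 0 < a <= 1 by case/andP: a1 => -> /ltW ->.
have h := tan_le a1' s0 (ltW g0) ltr01.
rewrite powR1 !mulr1 in h.
have hg : g `^ a = g `^ (a - 1) * g by rewrite mulrC mulr_powRB1 ?(ltW g0).
have h2 : g `^ (a - 1) <= a * s `^ (a - 1) + (1 - a) * s `^ a / g.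
  rewrite -(ler_pM2r g0) mulrDl -hg (le_trans h) //.
  by rewrite divfK ?gt_eqF.
have : 0 <= g `^ (a - 1) * (a * r `^ (a - 1)) by rewrite !mulr_ge0 ?powR_ge0 // ltW.
rewrite /K1 /K3; lra.
Qed.
End kappa.

Section helpers.
Context {R : realType}.
Lemma invpowR (m c : R) : 0 < m -> (m^-1) `^ c = m `^ (- c).
Proof. by move=> m0; rewrite -powR_inv1 ?ltW // -powRrM mulN1r. Qed.

Lemma tanval (a m : R) : 0 < m ->
  a * (m^-1) `^ (a - 1) + (1 - a) * (m^-1) `^ a * m = m `^ (1 - a).
Proof.
move=> m0; have mi0 : 0 < m^-1 by rewrite invr_gt0.
have -> : (m^-1) `^ a = (m^-1) `^ (a - 1) * m^-1.
  have e : a = (a - 1) + 1 by ring.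
  rewrite {1}e powRD ?powRr1 ?(ltW mi0) //.
  by rewrite (gt_eqF mi0) implybT.
rewrite -mulrA divfK ?gt_eqF // (_ : 1 - a = - (a - 1)); last ring.
rewrite -invpowR //.
ring.
Qed.

Lemma Ksum (a g s r E : R) : 0 < g ->
  K1 a g s r + K2 a s + K3 a g s r * E =
  (a * s `^ (a - 1) + (1 - a) * s `^ a * (1 + E / g)) +
  g `^ (a - 1) * (a * r `^ (a - 1) + (1 - a) * r `^ a * (1 - E) - 1).
Proof. by move=> g0; rewrite /K1 /K2 /K3; field; rewrite gt_eqF. Qed.

Lemma small_pow (c K e : R) : 0 < c -> 0 <= K -> 0 < e ->
  exists2 r, 0 < r & K * r `^ (- c) <= e.
Proof.
move=> c0 K0 e0; set y := K / (c * e).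
exists (expR y); first exact: expR_gt0.
rewrite -expRM.
have e1 : y * - c = - (K / e) by rewrite /y; field; rewrite !gt_eqF.
rewrite e1 expRN.
have h := expR_ge1Dx (K / e).
rewrite -[K * _]/(K / expR (K / e)) ler_pdivrMr ?expR_gt0 //.
apply: (le_trans _ (ler_wpM2l (ltW e0) h)).
have -> : e * (1 + K / e) = e + K by field; rewrite gt_eqF.
lra.
Qed.

Lemma big_pow (c K M : R) : 0 < c -> 0 < K ->
  exists2 r, 0 < r & M <= K * r `^ c.
Proof.
move=> c0 K0; set y := `|M| / (K * c).
exists (expR y); first exact: expR_gt0.
rewrite -expRM.
have e1 : y * c = `|M| / K by rewrite /y; field; rewrite !gt_eqF.
rewrite e1.
have h := expR_ge1Dx (`|M| / K).
apply: (le_trans _ (ler_wpM2l (ltW K0) h)).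
have -> : K * (1 + `|M| / K) = K + `|M| by field; rewrite gt_eqF.
have := ler_norm M; lra.
Qed.

Lemma ge_all_pinfty (x : \bar R) : (forall M : R, (M%:E <= x)%E) -> x = +oo%E.
Proof.
case: x => // [r|] h.
  by exfalso; have := h (r + 1); rewrite lee_fin; lra.
by have := h 0; rewrite leeNy_eq.
Qed.

Lemma epowE (x c : R) : 0 <= x -> (0 < x \/ 0 < c) -> epow x c = (x `^ c)%:E.
Proof.
move=> x0 h; rewrite /epow; case: ifPn => // xp.
case: h => [hx|c0]; first by rewrite hx in xp.
have -> : x = 0 by apply/eqP; rewrite eq_le x0 andbT leNgt.
by rewrite c0 powR0 ?gt_eqF.
Qed.

Lemma elogb_le (b : R) (x y : \bar R) : 0 < ln b -> (x <= y)%E ->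
  (elogb b x <= elogb b y)%E.
Proof.
move=> b0; case: x => [rx| |]; case: y => [ry| |] //=; rewrite ?leey ?leNye //.
- rewrite lee_fin => h; case: ifPn => hx; last by rewrite leNye.
  rewrite ifT; last exact: lt_le_trans h.
  rewrite lee_fin /logb ler_pM2r ?invr_gt0 // ler_ln // posrE.
  exact: lt_le_trans h.
Qed.

Lemma lee_nmul (z : R) (x y : \bar R) : z < 0 -> (x <= y)%E -> (z%:E * y <= z%:E * x)%E.
Proof.
move=> z0 h; have -> : z = - (- z) by rewrite opprK.
rewrite EFinN !mulNe leeN2; apply: lee_wpmul2l => //.
by rewrite lee_fin oppr_ge0 ltW.
Qed.
Lemma renyi_step (b a X : R) (H : \bar R) : 0 < ln b -> a != 1 ->
  (((X - 1) / (a - 1))%:E <= H)%E ->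
  (((a - 1)^-1)%:E * elogb b X%:E <= ((a - 1)^-1)%:E * elogb b (1 + (a - 1)%:E * H))%E.
Proof.
move=> b0 a1 hH.
have [a1'|a1'|a1'] := ltgtP a 1; last by rewrite a1' eqxx in a1.
- have an : a - 1 < 0 by rewrite subr_lt0.
  apply: lee_nmul; first by rewrite invr_lt0.
  apply: elogb_le => //.
  case: H hH => [h| |] hH.
  + rewrite lee_fin in hH; rewrite -EFinM -EFinD lee_fin.
    have := ler_wnM2l (ltW an) hH.
    rewrite mulrCA divff ?lt_eqF // mulr1; lra.
  + by rewrite lt0_muley ?lte_fin // addeNy leNye.
  + by rewrite leeNy_eq in hH.
- have ap : 0 < a - 1 by rewrite subr_gt0.
  apply: lee_wpmul2l; first by rewrite lee_fin invr_ge0 ltW.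
  apply: elogb_le => //.
  case: H hH => [h| |] hH.
  + rewrite lee_fin in hH; rewrite -EFinM -EFinD lee_fin.
    have := ler_wpM2l (ltW ap) hH.
    rewrite mulrCA divff ?gt_eqF // mulr1; lra.
  + by rewrite gt0_muley ?lte_fin // addey // leey.
  + by rewrite leeNy_eq in hH.
Qed.
End helpers.

Section integ.
Local Open Scope ereal_scope.
Context {R : realType} {d : measure_display} {T : measurableType d}.
Variable mu : {measure set T -> \bar R}.
Variables (p q : T -> R) (g : R).
Hypotheses (mp : measurable_fun setT p) (mq : measurable_fun setT q).
Hypotheses (p0 : forall x, (0 <= p x)%R) (q0 : forall x, (0 <= q x)%R).
Hypotheses (ip : \int[mu]_x (p x)%:E = 1) (iq : \int[mu]_x (q x)%:E = 1).
Hypothesis g1 : (1 <= g)%R.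

Let hh x := Num.max (p x - g * q x)%R 0%R.

Let int_ge0 (u : T -> R) : measurable_fun setT u -> (forall x, 0 <= u x)%R ->
  \int[mu]_x (u x)%:E = 1 -> mu.-integrable setT (EFin \o u).
Proof.
move=> mu0 u0 iu; apply/integrableP; split; first exact/measurable_EFinP.
under eq_integral do rewrite gee0_abs ?lee_fin //.
by rewrite iu ltry.
Qed.

Let ipp := int_ge0 mp p0 ip.
Let iqq := int_ge0 mq q0 iq.

Let mhh : measurable_fun setT hh.
Proof.
apply: measurable_maxr => //; apply: measurable_funB => //.
exact: measurable_funM.
Qed.

Let hh_ge0 x : (0 <= hh x)%R. Proof. by rewrite /hh le_max lexx orbT. Qed.
Let hh_le x : (hh x <= p x)%R.
Proof. by rewrite /hh ge_max p0 andbT gerBl mulr_ge0 // (le_trans ler01 g1). Qed.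

Let ihh : mu.-integrable setT (EFin \o hh).
Proof.
apply: le_integrable ipp => //; first exact/measurable_EFinP.
by move=> x _; rewrite /= lee_fin !ger0_norm ?hh_le ?hh_ge0 ?p0.
Qed.

Lemma Egamma_E : (Egamma mu g p q)%:E = \int[mu]_x (hh x)%:E.
Proof.
rewrite /Egamma fineK //.
rewrite ge0_fin_numE; last by apply: integral_ge0 => x _; rewrite lee_fin; exact: hh_ge0.
apply: (@le_lt_trans _ _ (\int[mu]_x (p x)%:E)); last by rewrite ip ltry.
apply: ge0_le_integral => //.
- by move=> x _; rewrite lee_fin; apply: hh_ge0.
- exact/measurable_EFinP.
- exact/measurable_EFinP.
- by move=> x _; rewrite lee_fin; apply: hh_le.
Qed.

Lemma Egamma_bounds : (0 <= Egamma mu g p q <= 1)%R.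
Proof.
have := Egamma_E; rewrite -lee_fin -[(_ <= 1)%R]lee_fin => ->.
apply/andP; split; first by apply: integral_ge0 => x _; rewrite lee_fin.
rewrite -ip; apply: ge0_le_integral => //.
- by move=> x _; rewrite lee_fin; apply: hh_ge0.
- exact/measurable_EFinP.
- exact/measurable_EFinP.
- by move=> x _; rewrite lee_fin; apply: hh_le.
Qed.


Let mqi : measurable_fun setT (fun x => (q x)^-1)%R.
Proof.
rewrite (_ : (fun x => _) = fun x => q x `^ (-1))%R; last first.
  by apply/funext => x; rewrite powR_inv1.
exact: measurableT_comp (measurable_powR _) mq.
Qed.

Lemma meas_integrand (f : R -> R) : measurable_fun setT f ->
  measurable_fun setT (fdiv_integrand f p q).
Proof.
move=> mf; rewrite /fdiv_integrand.
apply: measurable_fun_ifT.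
- exact: measurable_fun_ltr.
- apply/measurable_EFinP; apply: measurable_funM => //.
  apply: measurableT_comp mf _; exact: measurable_funM.
apply: measurable_fun_ifT.
- exact: measurable_fun_ltr.
- apply: emeasurable_funM => //; exact/measurable_EFinP.
exact: measurable_cst.
Qed.

Lemma fdiv_lower (f : R -> R) (k1 k2 k3 : R) : measurable_fun setT f ->
  (forall t, 0 <= t -> k1 * t + k2 + k3 * Num.max (t - g) 0 <= f t)%R ->
  (k1 + k3)%:E <= fstar f ->
  (k1 + k2 + k3 * Egamma mu g p q)%:E <= fdiv mu f p q.
Proof.
move=> mf hf hs.
pose G x := (k1 * p x + k2 * q x + k3 * hh x)%:E.
have iG : mu.-integrable setT G.
  rewrite /G; under eq_fun do rewrite !EFinD !EFinM.
  apply: integrableD => //; first apply: integrableD => //.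
  + exact: integrableZl.
  + exact: integrableZl.
  + exact: integrableZl.
have intG : \int[mu]_x G x = (k1 + k2 + k3 * Egamma mu g p q)%:E.
  rewrite /G; under eq_integral do rewrite !EFinD !EFinM.
  rewrite integralD //; last 2 first.
    by apply: integrableD => //; exact: integrableZl.
    exact: integrableZl.
  rewrite integralD //; try exact: integrableZl.
  rewrite !integralZl // ip iq -Egamma_E !mule1 -!EFinM -!EFinD.
  done.
have GF x : G x <= fdiv_integrand f p q x.
  rewrite /G /fdiv_integrand; case: ifPn => [qx|qx].
    rewrite lee_fin.
    have pq0 : (0 <= p x / q x)%R by rewrite divr_ge0.
    have := ler_wpM2l (q0 x) (hf _ pq0).
    have -> : (q x * (k1 * (p x / q x) + k2 + k3 * Num.max (p x / q x - g) 0) =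
               k1 * p x + k2 * q x + k3 * hh x)%R; last by [].
    have em : (q x * Num.max (p x / q x - g) 0 = Num.max (p x - g * q x) 0)%R.
      rewrite maxr_pMr ?q0 // mulr0 mulrBr mulrCA mulfV ?gt_eqF // mulr1.
      by rewrite [(q x * g)%R]mulrC.
    rewrite /hh -em; field; by rewrite gt_eqF.
  have qx0 : q x = 0%R by apply/eqP; rewrite eq_le q0 andbT leNgt.
  rewrite qx0 mulr0 addr0 /hh qx0 mulr0 subr0.
  case: ifPn => [px|px].
    rewrite (_ : ( Num.max (p x) 0%R = p x)%R); last by apply/max_idPl; exact: p0.
    rewrite -mulrDl mulrC EFinM; apply: lee_wpmul2l => //; rewrite lee_fin; exact: p0.
  have px0 : p x = 0%R by apply/eqP; rewrite eq_le p0 andbT leNgt.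
  by rewrite px0 mulr0 maxxx mulr0 addr0.
have mF := meas_integrand mf.
have mG : measurable_fun setT G by exact: measurable_int iG.
rewrite -intG /fdiv integralE [leRHS]integralE; apply: leeB.
- apply: ge0_le_integral => //.
  + exact: measurable_funepos.
  + exact: measurable_funepos.
  + by move=> x _; apply: (@funepos_le _ _ setT) => //; rewrite ?in_setT // => y _; exact: GF.
- apply: ge0_le_integral => //.
  + exact: measurable_funeneg.
  + exact: measurable_funeneg.
  + by move=> x _; apply: (@funeneg_le _ _ setT) => //; rewrite ?in_setT // => y _; exact: GF.
Qed.



Let E := Egamma mu g p q.

Lemma hell_lower a s r : (0 < a)%R -> a != 1%R -> (0 < s)%R -> (0 < r)%R ->
  ((K1 a g s r + K2 a s + K3 a g s r * E - 1) / (a - 1))%:E <= hellinger mu a p q.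
Proof.
move=> a0 a1 s0 r0.
have -> : ((K1 a g s r + K2 a s + K3 a g s r * E - 1) / (a - 1) =
  K1 a g s r / (a - 1) + (K2 a s - 1) / (a - 1) + K3 a g s r / (a - 1) * E)%R.
  by rewrite /E; ring.
apply: fdiv_lower.
- apply: measurable_funM => //; apply: measurable_funB => //; exact: measurable_powR.
- by move=> t t0; apply: pow_kappa.
have [a1'|a1'|a1'] := ltgtP a 1%R; last by rewrite a1' eqxx in a1.
  rewrite fstar_pow_lt1 ?a0 ?a1' // lee_fin -mulrDl.
  rewrite mulr_ge0_le0 ?invr_le0 //; last by rewrite subr_le0 ltW.
  by apply: pow_slope => //; rewrite a0.
by rewrite fstar_pow_gt1 // leey.
Qed.

Lemma KL_lower b s r : (0 < ln b)%R -> (0 < s)%R -> (0 < r)%R ->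
  ((ln s + 1 - s * (1 + E / g) + ln r + 1 - r * (1 - E)) / ln b)%:E <= KL mu b p q.
Proof.
move=> b0 s0 r0.
have g0 : (0 < g)%R by apply: lt_le_trans g1.
have -> : ((ln s + 1 - s * (1 + E / g) + ln r + 1 - r * (1 - E)) / ln b =
   L1 s r / ln b + (- s) / ln b + L3 g s r / ln b * E)%R.
  by rewrite /L1 /L3 /E; field; rewrite !gt_eqF.
apply: fdiv_lower.
- apply: measurable_funM => //; apply: measurable_funM => //; exact: measurable_ln.
- move=> t t0.
  have h := KLW s0 r0 g1 t0.
  rewrite /logb mulrA.
  have -> : (L1 s r / ln b * t + - s / ln b + L3 g s r / ln b * Num.max (t - g) 0 =
    (L1 s r * t + - s + L3 g s r * Num.max (t - g) 0) / ln b)%R.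
    by field; rewrite gt_eqF.
  by rewrite ler_pM2r ?invr_gt0.
by rewrite fstar_KL // leey.
Qed.


Let g0 : (0 < g)%R. Proof. by apply: lt_le_trans g1. Qed.
Let EB : (0 <= E <= 1)%R. Proof. exact: Egamma_bounds. Qed.
Let m0 : (0 < 1 + E / g)%R.
Proof. case/andP: EB => E0 _; rewrite (lt_le_trans ltr01) // lerDl divr_ge0 // ltW // g0. Qed.

Lemma hell_main a : (0 < a)%R -> a != 1%R -> (E < 1 \/ a < 1)%R ->
  (((1 + E / g) `^ (1 - a) + g `^ (a - 1) * ((1 - E) `^ (1 - a) - 1) - 1) / (a - 1))%:E
  <= hellinger mu a p q.
Proof.
move=> a0 a1 ha.
have mi : (0 < (1 + E / g)^-1)%R by rewrite invr_gt0.
have [E1|E1] : (E < 1 \/ E = 1)%R.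
  by case/andP: EB => _; rewrite le_eqVlt => /orP[/eqP->|->]; [right|left].
  have n0 : (0 < 1 - E)%R by rewrite subr_gt0.
  have ni : (0 < (1 - E)^-1)%R by rewrite invr_gt0.
  have := hell_lower a0 a1 mi ni.
  by rewrite Ksum // tanval // tanval.
have a1' : (a < 1)%R by case: ha => //; rewrite E1 ltxx.
have c0 : (0 < 1 - a)%R by rewrite subr_gt0.
set G := (g `^ (a - 1))%R.
have G0 : (0 <= G)%R by apply: powR_ge0.
have K0 : (0 <= G * a / (1 - a))%R by rewrite divr_ge0 ?mulr_ge0 // ltW.
apply/lee_addgt0Pr => e e0.
have [r r0 hr] := small_pow c0 K0 e0.
have := hell_lower a0 a1 mi r0.
rewrite Ksum // tanval // E1 subrr powR0 ?subr_eq0 1?eq_sym //.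
rewrite mulr0 addr0 opprB in hr * => hV.
apply: le_trans (leeD2r _ hV); rewrite -EFinD lee_fin.
set V := (X in (_ <= X + _)%R).
have -> : V = ((((1 + 1 / g) `^ (1 - a) + G * (0 - 1) - 1) / (a - 1)) - G * a / (1 - a) * r `^ (a - 1))%R.
  rewrite /V /G; field; apply/andP; split; rewrite subr_eq0 //.
  by rewrite eq_sym.
lra.
Qed.


Lemma hell_inf a : (1 < a)%R -> E = 1%R -> hellinger mu a p q = +oo.
Proof.
move=> a1' E1.
have a0 : (0 < a)%R by apply: lt_trans a1'.
have a1 : a != 1%R by rewrite gt_eqF.
have mi : (0 < (1 + E / g)^-1)%R by rewrite invr_gt0.
have c0 : (0 < a - 1)%R by rewrite subr_gt0.
set G := (g `^ (a - 1))%R.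
have G0 : (0 < G)%R by apply: powR_gt0.
have K0 : (0 < G * a)%R by rewrite mulr_gt0.
apply: ge_all_pinfty => M.
have [r r0 hr] := big_pow (M * (a - 1) + G + 1)%R c0 K0.
have := hell_lower a0 a1 mi r0.
rewrite Ksum // tanval // E1 subrr mulr0 addr0 => hV.
apply: le_trans hV; rewrite lee_fin ler_pdivlMr //.
have : (0 <= (1 + 1 / g) `^ (1 - a))%R by apply: powR_ge0.
rewrite -/G; nra.
Qed.

Lemma KL_main b : (0 < ln b)%R -> (E < 1)%R ->
  ((- (ln (1 + E / g) + ln (1 - E))) / ln b)%:E <= KL mu b p q.
Proof.
move=> b0 E1.
have n0 : (0 < 1 - E)%R by rewrite subr_gt0.
have mi : (0 < (1 + E / g)^-1)%R by rewrite invr_gt0.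
have ni : (0 < (1 - E)^-1)%R by rewrite invr_gt0.
have := KL_lower b0 mi ni.
rewrite !lnV ?posrE // !mulVf ?gt_eqF //.
by rewrite (_ : (- ln (1 + E / g) + 1 - 1 + - ln (1 - E) + 1 - 1 = - (ln (1 + E / g) + ln (1 - E)))%R) //; ring.
Qed.

Lemma KL_inf b : (0 < ln b)%R -> E = 1%R -> KL mu b p q = +oo.
Proof.
move=> b0 E1.
have mi : (0 < (1 + E / g)^-1)%R by rewrite invr_gt0.
apply: ge_all_pinfty => M.
have r0 : (0 < expR (M * ln b + ln (1 + E / g)))%R by apply: expR_gt0.
have := KL_lower b0 mi r0.
rewrite expRK lnV ?posrE // mulVf ?gt_eqF // E1 subrr mulr0 => hV.
apply: le_trans hV; rewrite lee_fin ler_pdivlMr //.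
rewrite -E1; lra.
Qed.

End integ.

Unset Implicit Arguments.

Theorem corollary2 (R : realType) (d : measure_display) (T : measurableType d)
    (mu : {measure set T -> \bar R}) (b : R) (p q : T -> R) (alpha gamma : R) :
  1 < b ->
  measurable_fun setT p -> measurable_fun setT q ->
  (forall x, 0 <= p x) -> (forall x, 0 <= q x) ->
  (\int[mu]_x (p x)%:E)%E = 1%E -> (\int[mu]_x (q x)%:E)%E = 1%E ->
  0 < alpha -> 1 <= gamma ->
  let E := Egamma mu gamma p q in
  (alpha != 1 ->
     (((alpha - 1)^-1)%:E *
        (epow (1 + E / gamma) (1 - alpha) + epow ((1 - E) / gamma) (1 - alpha)
         - 1%E - (gamma `^ (alpha - 1))%:E) <= hellinger mu alpha p q)%E)
  /\ ((- elogb (expR 1) ((1 + E / gamma) * (1 - E))%:E <= KL mu (expR 1) p q)%E)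
  /\ (alpha != 1 ->
     (((alpha - 1)^-1)%:E *
        elogb b (epow (1 + E / gamma) (1 - alpha)
                 + (gamma `^ (alpha - 1))%:E * (epow (1 - E) (1 - alpha) - 1%E))
      <= renyi mu b alpha p q)%E)
  /\ (alpha = 1 ->
     renyi mu b alpha p q = KL mu b p q /\
     (- elogb b ((1 + E / gamma) * (1 - E))%:E <= KL mu b p q)%E).
Proof.
move=> b1 mp mq p0 q0 ip iq a0 g1 E.
have EE : E = Egamma mu gamma p q by [].
clearbody E.
have hmain := hell_main mp mq p0 q0 ip iq g1.
have hinf := hell_inf mp mq p0 q0 ip iq g1.
have kmain := KL_main mp mq p0 q0 ip iq g1.
have kinf := KL_inf mp mq p0 q0 ip iq g1.
rewrite -EE in hmain hinf kmain kinf.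
have EB : 0 <= E <= 1 by rewrite EE; exact: Egamma_bounds mp mq p0 q0 ip g1.
have g0 : 0 < gamma by apply: lt_le_trans g1.
have b0 : 0 < ln b by apply: ln_gt0.
have e0 : 0 < ln (expR 1 : R) by rewrite expRK.
case/andP: EB => E0 E1.
have m0 : 0 < 1 + E / gamma by rewrite (lt_le_trans ltr01) // lerDl divr_ge0 // ltW.
have hE : E < 1 \/ E = 1.
  by move: E1; rewrite le_eqVlt => /orP[/eqP->|->]; [right|left].
have KLb : forall c : R, 0 < ln c ->
    (- elogb c ((1 + E / gamma) * (1 - E))%:E <= KL mu c p q)%E.
  move=> c c0; case: hE => [El|Eq].
    have n0 : 0 < 1 - E by rewrite subr_gt0.
    rewrite /= mulr_gt0 // -EFinN.
    apply: le_trans (kmain c c0 El); rewrite lee_fin /logb lnM ?posrE //.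
    by rewrite mulNr.
  by rewrite kinf // leey.
have hcase : alpha != 1 -> (E < 1 \/ alpha < 1) \/ (E = 1 /\ 1 < alpha).
  move=> a1; case: hE => [El|Eq]; first by left; left.
  have [a1'|a1'|a1'] := ltgtP alpha 1; last by rewrite a1' eqxx in a1.
    by left; right.
  by right.
have n0 : 0 <= 1 - E by rewrite subr_ge0.
split.
  move=> a1; case: (hcase a1) => [good|[Eq a1']]; last by rewrite hinf // leey.
  have hp : 0 < (1 - E) / gamma \/ 0 < 1 - alpha.
    case: good => [El|al]; [left; rewrite divr_gt0 // subr_gt0 | right; rewrite subr_gt0] => //.
  rewrite (epowE (ltW m0) (or_introl m0)) (epowE _ hp); last by rewrite divr_ge0 // ltW.
  rewrite -EFinD -EFinM.
  apply: le_trans (hmain _ a0 a1 good); rewrite lee_fin le_eqVlt; apply/orP; left; apply/eqP.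
  rewrite powRM ?invr_ge0 ?(ltW g0) // invpowR // opprB.
  by field; rewrite subr_eq0.
split; first exact: KLb _ e0.
split.
  move=> a1; rewrite /renyi (negbTE a1).
  case: (hcase a1) => [good|[Eq a1']]; last first.
    rewrite hinf // gt0_muley ?lte_fin ?subr_gt0 // addey //=.
    by rewrite gt0_muley ?lte_fin ?invr_gt0 ?subr_gt0 // leey.
  have hp : 0 < 1 - E \/ 0 < 1 - alpha.
    case: good => [El|al]; [left; rewrite subr_gt0 | right; rewrite subr_gt0] => //.
  rewrite (epowE (ltW m0) (or_introl m0)) (epowE n0 hp).
  rewrite -EFinB -EFinM -EFinD.
  exact: renyi_step b0 a1 (hmain _ a0 a1 good).
move=> a1; split; first by rewrite /renyi a1 eqxx.
exact: KLb _ b0.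
Qed.
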